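(* There is a universal constant $c>0$ such that for all sufficiently large $T$ and every (possibly randomized) forecasting algorithm $\mathcal{A}$ the following holds. Run $\mathcal{A}$ for $T$ steps on outcomes $x_1,\ldots,x_T$ that are independent $\mathrm{Bernoulli}(1/2)$ bits, and let $S_t = \sum_{t'=1}^t (x_{t'} - p_{t'})$ for $t \in [T]$. Then at least one of the following holds: $\Pr[\max_{t \in [T]} |S_t| \ge c\,T^{1/3}] \ge c$, or $\mathbb{E}[\mathsf{smCE}(x,p)] \ge c\,T^{1/3}$, where probability and expectation are over the random bits and the randomness of $\mathcal{A}$.
   Context: A forecasting algorithm chooses each prediction $p_t \in [0,1]$ as a (possibly randomized) function of $x_1,\ldots,x_{t-1}, p_1,\ldots,p_{t-1}$, before $x_t$ is revealed. $\mathsf{smCE}(x,p) = \sup_{f \in \mathcal{F}} \sum_{t=1}^T f(p_t)(x_t - p_t)$, where $\mathcal{F}$ is the family of $1$-Lipschitz functions from $[0,1]$ to $[-1,1]$. *)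

(* Defs.v *)
From HB Require Import structures.
From mathcomp Require Import all_boot all_order all_algebra.
From mathcomp Require Import all_classical all_reals all_analysis.
Set Implicit Arguments. Unset Strict Implicit. Unset Printing Implicit Defensive.
Import Order.TTheory GRing.Theory Num.Theory.
Local Open Scope ring_scope.

(* The family F: 1-Lipschitz functions [0,1] -> [-1,1]
   (represented as functions R -> R; only values on [0,1] matter). *)
Definition lip_family (R : realType) (f : R -> R) : Prop :=
  (forall u v : R, 0 <= u <= 1 -> 0 <= v <= 1 -> `|f u - f v| <= `|u - v|) /\
  (forall u : R, 0 <= u <= 1 -> `|f u| <= 1).

Definition smCE (R : realType) (T : nat) (x p : 'I_T -> R) : R :=
  sup [set s : R | exists f : R -> R, lip_family f /\
                     s = \sum_(t < T) f (p t) * (x t - p t)].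

(* A (possibly randomized) forecaster with random tape w in Omega: the
   prediction at time t is alg w [:: x_1; ...; x_{t}] (prefix of length t
   of past outcomes).  Past predictions are themselves functions of w and the
   past outcomes, so they need not be passed explicitly. *)
Definition prediction (Omega : Type) (R : realType) (T : nat)
  (alg : Omega -> seq bool -> R) (x : {ffun 'I_T -> bool}) (w : Omega)
  (t : 'I_T) : R :=
  alg w (map x (take t (enum 'I_T))).

Definition outcome (R : realType) (T : nat) (x : {ffun 'I_T -> bool})
  (t : 'I_T) : R := (x t)%:R.

(* S_{t+1} = sum_{t' <= t} (x_{t'} - p_{t'})  (0-indexed t) *)
Definition partial_bias (R : realType) (T : nat) (x p : 'I_T -> R)
  (t : 'I_T) : R := \sum_(i < T | (i <= t)%N) (x i - p i).

(* Main.v *)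
Require Import Defs.
From HB Require Import structures.
From mathcomp Require Import all_boot all_order all_algebra.
From mathcomp Require Import all_classical all_reals all_analysis.
From mathcomp Require Import measurable_realfun.
From mathcomp Require Import ring lra.
Import Order.TTheory GRing.Theory Num.Theory.
Local Open Scope ring_scope.

Set Implicit Arguments. Unset Strict Implicit. Unset Printing Implicit Defensive.

Definition sx (T : nat) (x : {ffun 'I_T -> bool}) : seq bool := map x (enum 'I_T).
Definition xv (R : realType) (s : seq bool) (t : nat) : R := (nth false s t)%:R.
Definition pr (R : realType) (alg : seq bool -> R) (s : seq bool) (t : nat) : R := alg (take t s).
Definition yv (R : realType) alg s t : R := xv R s t - pr alg s t.
Definition ev (R : realType) s t : R := xv R s t - 2^-1.
Definition dv (R : realType) (alg : seq bool -> R) s t : R := pr alg s t - 2^-1.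
Definition Ps (R : realType) (alg : seq bool -> R) s j : R := \sum_(0 <= i < j) yv alg s i.
Definition gd (R : realType) (alg : seq bool -> R) (del : R) s t : bool :=
  all (fun i => `|Ps alg s i.+1| < del) (iota 0 t).
Definition av (R : realType) (alg : seq bool -> R) (del : R) s t : R := (gd alg del s t)%:R.

Lemma nth_sx T (x : {ffun 'I_T -> bool}) (j : 'I_T) : nth false (sx x) j = x j.
Proof. by rewrite /sx (nth_map j) ?size_enum_ord // nth_ord_enum. Qed.

Lemma xv_take R s t u : (u < t)%N -> xv R (take t s) u = xv R s u.
Proof. by move=> h; rewrite /xv nth_take. Qed.
Lemma pr_take R alg s t u : (u <= t)%N -> @pr R alg (take t s) u = pr alg s u.
Proof. by move=> h; rewrite /pr take_takel. Qed.
Lemma yv_take R alg s t u : (u < t)%N -> @yv R alg (take t s) u = yv alg s u.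
Proof. by move=> h; rewrite /yv xv_take // pr_take // ltnW. Qed.
Lemma ev_take R s t u : (u < t)%N -> ev R (take t s) u = ev R s u.
Proof. by move=> h; rewrite /ev xv_take. Qed.
Lemma dv_take R alg s t u : (u <= t)%N -> @dv R alg (take t s) u = dv alg s u.
Proof. by move=> h; rewrite /dv pr_take. Qed.
Lemma Ps_take R alg s t j : (j <= t)%N -> @Ps R alg (take t s) j = Ps alg s j.
Proof.
move=> h; apply: eq_big_nat => i /andP[_ hi]; apply: yv_take.
exact: leq_trans hi h.
Qed.
Lemma gd_take R alg del s t u : (u <= t)%N -> @gd R alg del (take t s) u = gd alg del s u.
Proof.
move=> h; rewrite /gd; apply: eq_in_all => i; rewrite mem_iota add0n => /andP[_ hi].
by rewrite Ps_take // (leq_trans hi h).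
Qed.
Lemma av_take R alg del s t u : (u <= t)%N -> @av R alg del (take t s) u = av alg del s u.
Proof. by move=> h; rewrite /av gd_take. Qed.

Lemma mem_take_ord T t (j : 'I_T) : j \in take t (enum 'I_T) -> (j < t)%N.
Proof.
move=> hj; have := map_f val hj.
rewrite map_take val_enum_ord take_iota mem_iota add0n => /andP[_].
by rewrite ltn_min => /andP[].
Qed.

Lemma flip_sum (R : realType) (T t : nat) (G : seq bool -> R) : (t < T)%N ->
  (forall s, G s = G (take t s)) ->
  \sum_(x : {ffun 'I_T -> bool}) G (sx x) * ev R (sx x) t = 0.
Proof.
move=> ht hG; set i := Ordinal ht.
pose fl (x : {ffun 'I_T -> bool}) : {ffun 'I_T -> bool} :=
  [ffun j => if j == i then ~~ x j else x j].
have flK : involutive fl.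
  move=> x; apply/ffunP => j; rewrite !ffunE; case: eqP => // _; exact: negbK.
have htk x : take t (sx (fl x)) = take t (sx x).
  rewrite /sx -(map_take t (fl x)) -(map_take t x); apply/eq_in_map => j hj; rewrite ffunE ifN //.
  apply/eqP => ji; move: (@mem_take_ord T t j hj); rewrite ji /= ltnn //.
have hev x : ev R (sx (fl x)) t = - ev R (sx x) t.
  rewrite /ev /xv -[t]/(val i) !nth_sx ffunE eqxx.
  by case: (x i) => /=; lra.
set S := \sum_x _.
have : S = - S.
  rewrite {1}/S (reindex_inj (inv_inj flK)) /S -sumrN; apply: eq_bigr => x _.
  by rewrite hG htk -hG hev mulrN.
lra.
Qed.

Lemma ev_sq R s t : ev R s t ^+ 2 = 4^-1.
Proof. by rewrite /ev /xv; case: (nth false s t) => /=; field. Qed.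

Lemma av_sq R alg del s t : @av R alg del s t ^+ 2 = av alg del s t.
Proof. by rewrite /av; case: (gd _ _ _ _) => /=; rewrite ?expr0n ?expr1n. Qed.

Lemma av01 R alg del s t : 0 <= @av R alg del s t <= 1.
Proof. by rewrite /av; case: (gd _ _ _ _) => /=; rewrite ?lexx ?ler01. Qed.

Lemma blk_sq (R : realType) (T : nat) alg (del : R) lo L : (lo + L <= T)%N ->
  \sum_(x : {ffun 'I_T -> bool})
     (\sum_(lo <= t < lo + L) av alg del (sx x) t * ev R (sx x) t) ^+ 2 =
  \sum_(x : {ffun 'I_T -> bool}) \sum_(lo <= t < lo + L) av alg del (sx x) t / 4.
Proof.
elim: L => [|L IH] hT.
  by apply: eq_bigr => x _; rewrite addn0 !big_geq // expr0n.
have hlt : (lo + L < T)%N by rewrite addnS in hT.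
have {}IH := IH (ltnW hlt).
rewrite addnS.
under eq_bigr => x _ do rewrite big_nat_recr ?leq_addr //=.
under [in RHS]eq_bigr => x _ do rewrite big_nat_recr ?leq_addr //=.
rewrite big_split /= -IH -big_split /=.
transitivity (\sum_(x : {ffun 'I_T -> bool})
  ((\sum_(lo <= t < lo + L) av alg del (sx x) t * ev R (sx x) t) ^+ 2 +
   av alg del (sx x) (lo + L) / 4 +
   (2 * (\sum_(lo <= t < lo + L) av alg del (sx x) t * ev R (sx x) t) *
     av alg del (sx x) (lo + L)) * ev R (sx x) (lo + L))).
  apply: eq_bigr => x _.
  rewrite sqrrD exprMn ev_sq av_sq; ring.
rewrite big_split /= (@flip_sum R T (lo + L) (fun s => 2 * (\sum_(lo <= t < lo + L) av alg del s t * ev R s t) * av alg del s (lo + L))) ?addr0 //.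
move=> s; congr (2 * _ * _); last by rewrite av_take.
apply: eq_big_nat => u /andP[_ hu].
by rewrite av_take ?ev_take // ltnW.
Qed.

Lemma gdS (R : realType) alg (del : R) s j :
  gd alg del s j.+1 = gd alg del s j && (`|Ps alg s j.+1| < del).
Proof. by rewrite /gd -[in iota 0 j.+1]addn1 iotaD all_cat /= add0n andbT. Qed.

Lemma gd_Ps (R : realType) alg (del : R) s j : 0 <= del -> gd alg del s j -> `|Ps alg s j| <= del.
Proof.
move=> d0; case: j => [|j].
  by rewrite /Ps big_geq // normr0.
by rewrite gdS => /andP[_ /ltW].
Qed.

Lemma Z_bound (R : realType) alg (del : R) s : 0 <= del -> (forall t, `|yv alg s t| <= 1) ->
  forall j, `|\sum_(0 <= t < j) av alg del s t * yv alg s t| <= del + 1.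
Proof.
move=> d0 hy j.
suff : (gd alg del s j -> \sum_(0 <= t < j) av alg del s t * yv alg s t = Ps alg s j) /\
       `|\sum_(0 <= t < j) av alg del s t * yv alg s t| <= del + 1 by case.
elim: j => [|j [IH1 IH2]].
  rewrite big_geq // normr0 /Ps big_geq //; split => //; lra.
rewrite big_nat_recr //=; split.
  rewrite gdS => /andP[gj _].
  by rewrite IH1 // /av gj mul1r /Ps [in RHS]big_nat_recr.
case gj: (gd alg del s j); rewrite /av gj ?mul1r ?mul0r ?addr0 //.
rewrite IH1 //; apply: le_trans (ler_normD _ _) _.
by apply: lerD; [exact: gd_Ps|exact: hy].
Qed.

Lemma Sblk_bound (R : realType) alg (del : R) s lo hi : 0 <= del -> (lo <= hi)%N ->
  (forall t, `|yv alg s t| <= 1) ->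
  `|\sum_(lo <= t < hi) av alg del s t * yv alg s t| <= 2 * (del + 1).
Proof.
move=> d0 lh hy.
have -> : \sum_(lo <= t < hi) av alg del s t * yv alg s t =
  \sum_(0 <= t < hi) av alg del s t * yv alg s t - \sum_(0 <= t < lo) av alg del s t * yv alg s t.
  by rewrite (@big_cat_nat _ _ _ lo 0 hi) //= addrAC subrr add0r.
apply: le_trans (ler_normB _ _) _.
by rewrite mulrC mulr_natr mulr2n; apply: lerD; exact: Z_bound.
Qed.

Lemma cs_sum (R : realType) (r : seq nat) (u : nat -> R) :
  (\sum_(i <- r) u i) ^+ 2 <= (size r)%:R * \sum_(i <- r) u i ^+ 2.
Proof.
elim: r => [|a r IH]; first by rewrite !big_nil expr0n mul0r.
rewrite !big_cons /= mulrS.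
set A := \sum_(i <- r) u i in IH *; set B := \sum_(i <- r) u i ^+ 2 in IH *.
set n := (size r)%:R in IH *.
have B0 : 0 <= B by apply: sumr_ge0 => i _; exact: sqr_ge0.
have n0 : 0 <= n by exact: ler0n.
have [n0e|np] := eqVneq n 0.
  have hA : A ^+ 2 <= 0 by move: IH; rewrite n0e mul0r.
  have A0 : A = 0 by apply/eqP; rewrite -sqrf_eq0 eq_le hA sqr_ge0.
  rewrite A0 n0e; nra.
have npos : 0 < n by rewrite lt0r np.
have key : 0 <= n * u a ^+ 2 - 2 * u a * A + B.
  have : 0 <= n * (n * u a ^+ 2 - 2 * u a * A + B).
    have -> : n * (n * u a ^+ 2 - 2 * u a * A + B) = (n * u a - A) ^+ 2 + (n * B - A ^+ 2) by ring.
    by apply: addr_ge0; [exact: sqr_ge0|rewrite subr_ge0].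
  by rewrite pmulr_rge0.
nra.
Qed.

Lemma gd_mono (R : realType) alg (del : R) s t T : (t <= T)%N -> gd alg del s T -> gd alg del s t.
Proof.
move=> tT /allP h; apply/allP => i; rewrite mem_iota add0n => /andP[_ hi].
by apply: h; rewrite mem_iota add0n /= (leq_trans hi tT).
Qed.

Lemma av_mono (R : realType) alg (del : R) s t T : (t <= T)%N -> av alg del s T <= av alg del s t.
Proof.
move=> tT; rewrite /av; case gT: (gd alg del s T) => /=; last by rewrite ler0n.
by rewrite (gd_mono tT gT).
Qed.

Lemma yv_bound (R : realType) (alg : seq bool -> R) s t :
  (forall s, 0 <= alg s <= 1) -> `|yv alg s t| <= 1.
Proof.
move=> h; rewrite /yv /xv /pr; have /andP[h0 h1] := h (take t s).
by rewrite ler_norml; case: (nth false s t) => /=; lra.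
Qed.

Lemma card_ffunT T : #|{ffun 'I_T -> bool}| = (2 ^ T)%N.
Proof. by rewrite card_ffun card_bool card_ord. Qed.

Lemma blk_ineq (R : realType) (T : nat) (alg : seq bool -> R) (del : R) lo L :
  0 <= del -> (forall s, 0 <= alg s <= 1) -> (lo + L <= T)%N ->
  L%:R / 4 * \sum_(x : {ffun 'I_T -> bool}) av alg del (sx x) T <=
  2 * (2 * (del + 1)) ^+ 2 * (2 ^ T)%:R +
  2 * L%:R * \sum_(x : {ffun 'I_T -> bool}) \sum_(lo <= t < lo + L) dv alg (sx x) t ^+ 2.
Proof.
move=> d0 halg hT.
set b := 2 * (del + 1).
apply: (@le_trans _ _ (\sum_(x : {ffun 'I_T -> bool}) \sum_(lo <= t < lo + L) av alg del (sx x) t / 4)).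
  rewrite mulr_sumr; apply: ler_sum => x _.
  apply: (@le_trans _ _ (\sum_(lo <= t < lo + L) av alg del (sx x) T / 4)).
    by rewrite sumr_const_nat addKn -mulr_natl le_eqVlt; apply/orP; left; apply/eqP; ring.
  apply: ler_sum_nat => t /andP[_ ht]; apply: ler_wpM2r.
  - by rewrite invr_ge0.
  - by apply: av_mono; rewrite (leq_trans (ltnW ht) hT).
rewrite -blk_sq //.
have -> : 2 * b ^+ 2 * (2 ^ T)%:R = \sum_(x : {ffun 'I_T -> bool}) 2 * b ^+ 2.
  by rewrite sumr_const card_ffunT mulr_natr.
rewrite mulr_sumr -big_split /=; apply: ler_sum => x _.
set S := \sum_(lo <= t < lo + L) av alg del (sx x) t * yv alg (sx x) t.
set Q := \sum_(lo <= t < lo + L) av alg del (sx x) t * dv alg (sx x) t.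
have -> : \sum_(lo <= t < lo + L) av alg del (sx x) t * ev R (sx x) t = S + Q.
  rewrite /S /Q -big_split /=; apply: eq_bigr => t _.
  by rewrite /ev /yv /dv; ring.
have hS : S ^+ 2 <= b ^+ 2.
  have := Sblk_bound (lo := lo) (hi := lo + L) d0 (leq_addr _ _) (fun t => yv_bound (sx x) t halg).
  rewrite -/S ler_norml => /andP[h1 h2].
  have e : 0 <= (b - S) * (S + b) by apply: mulr_ge0; rewrite /b in h1 h2 *; lra.
  have -> : b ^+ 2 = S ^+ 2 + (b - S) * (S + b) by ring.
  by rewrite lerDl.
have hQ : Q ^+ 2 <= L%:R * \sum_(lo <= t < lo + L) dv alg (sx x) t ^+ 2.
  apply: le_trans (cs_sum _ _) _.
  rewrite size_iota addKn; apply: ler_wpM2l => //.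
  apply: ler_sum => t _; rewrite exprMn av_sq.
  have /andP[a0 a1] := av01 alg del (sx x) t.
  have := sqr_ge0 (dv alg (sx x) t); nra.
have e : (S + Q) ^+ 2 = 2 * S ^+ 2 + 2 * Q ^+ 2 - (S - Q) ^+ 2 by ring.
rewrite e; have := sqr_ge0 (S - Q); lra.
Qed.

Lemma all_blk (R : realType) (T : nat) (alg : seq bool -> R) (del : R) n L :
  0 <= del -> (forall s, 0 <= alg s <= 1) -> (n * L <= T)%N ->
  n%:R * (L%:R / 4 * \sum_(x : {ffun 'I_T -> bool}) av alg del (sx x) T) <=
  n%:R * (2 * (2 * (del + 1)) ^+ 2 * (2 ^ T)%:R) +
  2 * L%:R * \sum_(x : {ffun 'I_T -> bool}) \sum_(0 <= t < n * L) dv alg (sx x) t ^+ 2.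
Proof.
move=> d0 halg; elim: n => [|n IH] hT.
  rewrite !mul0r add0r mul0n; apply: mulr_ge0; first by apply: mulr_ge0 => //; rewrite ler0n.
  by apply: sumr_ge0 => x _; rewrite big_geq.
have hnL : (n * L + L <= T)%N by rewrite -mulSnr.
have {}IH := IH (leq_trans (leq_addr _ _) hnL).
have hb := blk_ineq d0 halg hnL.
rewrite mulSnr.
have -> : \sum_(x : {ffun 'I_T -> bool}) \sum_(0 <= t < n * L + L) dv alg (sx x) t ^+ 2 =
  \sum_(x : {ffun 'I_T -> bool}) \sum_(0 <= t < n * L) dv alg (sx x) t ^+ 2 +
  \sum_(x : {ffun 'I_T -> bool}) \sum_(n * L <= t < n * L + L) dv alg (sx x) t ^+ 2.
  rewrite -big_split /=; apply: eq_bigr => x _.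
  by rewrite (@big_cat_nat _ _ _ (n * L) 0 (n * L + L)) ?leq_addr.
rewrite mulrDr mulrSr !mulrDl !mul1r.
lra.
Qed.

Lemma dv_sum_le (R : realType) (T : nat) (alg : seq bool -> R) m : (m <= T)%N ->
  \sum_(x : {ffun 'I_T -> bool}) \sum_(0 <= t < m) dv alg (sx x) t ^+ 2 <=
  \sum_(x : {ffun 'I_T -> bool}) \sum_(0 <= t < T) dv alg (sx x) t ^+ 2.
Proof.
move=> hm; apply: ler_sum => x _.
rewrite (@big_cat_nat _ _ _ m 0 T) //= lerDl.
by apply: sumr_ge0 => t _; exact: sqr_ge0.
Qed.

Definition hh (R : realType) (T : nat) (alg : seq bool -> R) (s : seq bool) : R :=
  \sum_(0 <= t < T) (2^-1 - pr alg s t) * yv alg s t.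

Lemma hh_eq (R : realType) (T : nat) (alg : seq bool -> R) :
  \sum_(x : {ffun 'I_T -> bool}) hh T alg (sx x) =
  \sum_(x : {ffun 'I_T -> bool}) \sum_(0 <= t < T) dv alg (sx x) t ^+ 2.
Proof.
rewrite /hh exchange_big [RHS]exchange_big /=.
apply: eq_big_nat => t /andP[_ ht].
have -> : \sum_(x : {ffun 'I_T -> bool}) (2^-1 - pr alg (sx x) t) * yv alg (sx x) t =
  \sum_(x : {ffun 'I_T -> bool}) (dv alg (sx x) t ^+ 2 - dv alg (sx x) t * ev R (sx x) t).
  by apply: eq_bigr => x _; rewrite /dv /yv /ev; ring.
rewrite sumrB (@flip_sum R T t (fun s => dv alg s t)) ?subr0 //.
by move=> s; rewrite dv_take.
Qed.

Lemma core (R : realType) (T : nat) (alg : seq bool -> R) (del : R) n L :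
  0 <= del -> (forall s, 0 <= alg s <= 1) -> (n * L <= T)%N ->
  n%:R * (L%:R / 4 * \sum_(x : {ffun 'I_T -> bool}) av alg del (sx x) T) <=
  n%:R * (2 * (2 * (del + 1)) ^+ 2 * (2 ^ T)%:R) +
  2 * L%:R * \sum_(x : {ffun 'I_T -> bool}) hh T alg (sx x).
Proof.
move=> d0 halg hT; apply: le_trans (all_blk d0 halg hT) _.
rewrite hh_eq lerD2l; apply: ler_wpM2l; first by apply: mulr_ge0 => //; rewrite ler0n.
exact: dv_sum_le.
Qed.

Unset Implicit Arguments. Set Strict Implicit. Set Printing Implicit Defensive.
Local Open Scope classical_set_scope.

Lemma pred_eq (R : realType) (Om : Type) T (alg : Om -> seq bool -> R) x w (t : 'I_T) :
  prediction alg x w t = pr (alg w) (sx x) t.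
Proof. by rewrite /prediction /pr /sx map_take. Qed.

Lemma out_eq (R : realType) T (x : {ffun 'I_T -> bool}) (t : 'I_T) :
  outcome R x t = xv R (sx x) t.
Proof. by rewrite /outcome /xv nth_sx. Qed.

Lemma pb_eq (R : realType) (Om : Type) T (alg : Om -> seq bool -> R) x w (t : 'I_T) :
  partial_bias (outcome R x) (prediction alg x w) t = Ps (alg w) (sx x) t.+1.
Proof.
rewrite /partial_bias.
under eq_bigr => i _ do rewrite out_eq pred_eq -/(yv (alg w) (sx x) i).
rewrite -(big_mkord (fun i => (i <= t)%N) (fun i => yv (alg w) (sx x) i)).
rewrite /Ps (big_nat_widen _ _ _ _ _ (ltn_ord t)).
by apply: eq_bigl => i.
Qed.

Lemma hh_link (R : realType) (Om : Type) T (alg : Om -> seq bool -> R) (x : {ffun 'I_T -> bool}) w :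
  \sum_(t < T) (fun u : R => 2^-1 - u) (prediction alg x w t) *
     (outcome R x t - prediction alg x w t) = hh T (alg w) (sx x).
Proof.
under eq_bigr => i _ do rewrite out_eq pred_eq.
by rewrite /hh -(big_mkord xpredT (fun t => (2^-1 - pr (alg w) (sx x) t) * yv (alg w) (sx x) t)).
Qed.

Lemma smCE_ge (R : realType) (Om : Type) T (alg : Om -> seq bool -> R) (x : {ffun 'I_T -> bool}) w :
  (forall s, 0 <= alg w s <= 1) ->
  hh T (alg w) (sx x) <= smCE (outcome R x) (prediction alg x w).
Proof.
move=> halg; rewrite -hh_link /smCE.
apply: sup_upper_bound; last first.
  exists (fun u : R => 2^-1 - u); split => //; split.
    move=> u v _ _; rewrite (_ : 2^-1 - u - (2^-1 - v) = v - u); last by ring.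
    by rewrite distrC.
  by move=> u /andP[u0 u1]; rewrite ler_norml; apply/andP; split; lra.
split.
  by exists 0; exists (fun _ => 0); split; [split => //; move=> *; rewrite ?subrr ?normr0 //|rewrite big1 // => i _; rewrite mul0r].
exists T%:R => _ [f [[_ hf] ->]].
apply: (@le_trans _ _ (\sum_(i < T) (1:R))); last by rewrite sumr_const card_ord.
apply: ler_sum => i _.
have /andP[p0 p1] := halg (map x (take i (enum 'I_T))).
have hp : 0 <= prediction alg x w i <= 1 by rewrite /prediction; apply/andP.
have := hf _ hp; rewrite ler_norml => /andP[f0 f1].
rewrite /outcome; case: (x i) => /=; nra.
Qed.

Section M.
End M.

Lemma meas_Ps (R : realType) d (Om : measurableType d) (alg : Om -> seq bool -> R) s j :
  (forall s, measurable_fun setT (fun w => alg w s)) ->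
  measurable_fun setT (fun w => Ps (alg w) s j).
Proof.
move=> ma; rewrite /Ps /yv /pr.
apply: measurable_sum => i; apply: measurable_funB => //; exact: measurable_cst.
Qed.

Lemma meas_hh (R : realType) d (Om : measurableType d) (alg : Om -> seq bool -> R) T s :
  (forall s, measurable_fun setT (fun w => alg w s)) ->
  measurable_fun setT (fun w => hh T (alg w) s).
Proof.
move=> ma; rewrite /hh /yv /pr.
apply: measurable_sum => i; apply: measurable_funM.
  by apply: measurable_funB => //; exact: measurable_cst.
by apply: measurable_funB => //; exact: measurable_cst.
Qed.

Lemma meas_all d (Om : measurableType d) (r : seq nat) (F : nat -> Om -> bool) :
  (forall i, measurable_fun setT (F i)) ->
  measurable_fun setT (fun w => all (fun i => F i w) r).
Proof.
move=> mF; elim: r => [|i r IH] /=; first exact: measurable_cst.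
exact: measurable_and.
Qed.

Lemma meas_gd (R : realType) d (Om : measurableType d) (alg : Om -> seq bool -> R) (del : R) s T :
  (forall s, measurable_fun setT (fun w => alg w s)) ->
  measurable_fun setT (fun w => gd (alg w) del s T).
Proof.
move=> ma; rewrite /gd; apply: (@meas_all _ _ _ (fun i w => `|Ps (alg w) s i.+1| < del)) => i.
apply: measurable_fun_ltr; last exact: measurable_cst.
apply: measurableT_comp; first exact: normr_measurable.
exact: meas_Ps.
Qed.

Lemma B_eq (R : realType) (Om : Type) (alg : Om -> seq bool -> R) (del : R) T
  (x : {ffun 'I_T -> bool}) :
  [set w | exists t : 'I_T, del <= `|partial_bias (outcome R x) (prediction alg x w) t|] =
  (fun w => ~~ gd (alg w) del (sx x) T) @^-1` [set true].
Proof.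
apply/seteqP; split => w /=.
  move=> [t]; rewrite pb_eq => ht; apply/allPn; exists (val t).
    by rewrite mem_iota add0n /=.
  by rewrite -leNgt.
move/allPn => [i]; rewrite mem_iota add0n /= => hi.
rewrite -leNgt => h; exists (Ordinal hi); by rewrite pb_eq.
Qed.

Lemma B_meas (R : realType) d (Om : measurableType d) (alg : Om -> seq bool -> R) (del : R) T
  (x : {ffun 'I_T -> bool}) :
  (forall s, measurable_fun setT (fun w => alg w s)) ->
  measurable [set w | exists t : 'I_T, del <= `|partial_bias (outcome R x) (prediction alg x w) t|].
Proof.
move=> ma; rewrite B_eq -[X in measurable X]setTI.
apply: (measurable_neg (@meas_gd _ _ _ alg del (sx x) T ma)) => //.
Qed.

Lemma av_indic (R : realType) (Om : Type) (alg : Om -> seq bool -> R) (del : R) T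
  (x : {ffun 'I_T -> bool}) w :
  av (alg w) del (sx x) T =
  1 - \1_[set w | exists t : 'I_T, del <= `|partial_bias (outcome R x) (prediction alg x w) t|] w.
Proof.
rewrite B_eq indicE /av; case g: (gd (alg w) del (sx x) T).
  rewrite (_ : w \in _ = false) ?subr0 //.
  by apply/negbTE; rewrite notin_setE /= g.
rewrite (_ : w \in _ = true) ?subrr //.
by apply/idP; rewrite in_setE /= g.
Qed.

Section ie.
Local Open Scope ereal_scope.
Lemma int_mono_nm d (T : measurableType d) (R : realType) (mu : {measure set T -> \bar R}) (f g : T -> \bar R) :
 (forall x, (0 <= f x)%E) -> (forall x, (f x <= g x)%E) -> (\int[mu]_x f x <= \int[mu]_x g x)%E.
Proof.
move=> f0 fg.
have g0 : forall x, (0 <= g x)%E by move=> x; exact: le_trans (fg x).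
rewrite /integral /=.
have -> : ([eta f] \_ [set: T])^\- = ([eta g] \_ [set: T])^\-.
  apply/funext => x; rewrite !funenegE /patch /= in_setT.
  by rewrite !max_r // oppe_le0.
apply: leeB; last by [].
apply: le_ereal_sup => _ [h hf <-]; exists h => // x.
apply: le_trans (hf x) _; rewrite !funeposE /patch in_setT.
by apply: le_max2 => //; exact: fg.
Qed.
End ie.

Lemma smCE_ge0 (R : realType) (Om : Type) T (alg : Om -> seq bool -> R) (x : {ffun 'I_T -> bool}) w :
  (forall s, 0 <= alg w s <= 1) -> 0 <= smCE (outcome R x) (prediction alg x w).
Proof.
move=> halg; rewrite /smCE.
apply: sup_upper_bound; last first.
  exists (fun _ => 0); split.
    by split => [u v _ _|u _]; rewrite ?subrr ?normr0.
  by rewrite big1 // => i _; rewrite mul0r.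
split.
  by exists 0; exists (fun _ => 0); split; [split => //; move=> *; rewrite ?subrr ?normr0 //|rewrite big1 // => i _; rewrite mul0r].
exists T%:R => _ [f [[_ hf] ->]].
apply: (@le_trans _ _ (\sum_(i < T) (1:R))); last by rewrite sumr_const card_ord.
apply: ler_sum => i _.
have /andP[p0 p1] := halg (map x (take i (enum 'I_T))).
have hp : 0 <= prediction alg x w i <= 1 by rewrite /prediction; apply/andP.
have := hf _ hp; rewrite ler_norml => /andP[f0 f1].
rewrite /outcome; case: (x i) => /=; nra.
Qed.

Definition Bset (R : realType) (Om : Type) T (alg : Om -> seq bool -> R)
  (x : {ffun 'I_T -> bool}) (del : R) : set Om :=
  [set w | exists t : 'I_T, del <= `|partial_bias (outcome R x) (prediction alg x w) t|].
Arguments Bset {R Om T}.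

Lemma int_x (R : realType) d (Om : measurableType d) (P : probability Om R)
  (alg : Om -> seq bool -> R) T (x : {ffun 'I_T -> bool}) (del A Bc : R) :
  0 <= A -> 0 <= Bc ->
  (forall s, measurable_fun setT (fun w => alg w s)) ->
  (forall w s, 0 <= alg w s <= 1) ->
  (\int[P]_w ((A * Num.max (hh T (alg w) (sx x)) 0 + Bc * \1_(Bset alg x del) w)%:E) <=
   A%:E * \int[P]_w (smCE (outcome R x) (prediction alg x w))%:E + Bc%:E * P (Bset alg x del))%E.
Proof.
move=> A0 B0 ma halg.
have mB : measurable (Bset alg x del) by exact: B_meas.
have mh : measurable_fun setT (fun w => Num.max (hh T (alg w) (sx x)) 0).
  by apply: measurable_maxr; [exact: meas_hh|exact: measurable_cst].
have h1 : forall w, setT w -> (0 <= (Num.max (hh T (alg w) (sx x)) 0)%:E)%E.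
  by move=> w hw; rewrite lee_fin le_max lexx orbT.
have h2 : forall w, setT w -> (0 <= (\1_(Bset alg x del) w : R)%:E)%E.
  by move=> w hw; rewrite lee_fin indicE ler0n.
have m1 : measurable_fun setT (fun w => (Num.max (hh T (alg w) (sx x)) 0)%:E).
  exact/measurable_EFinP.
have m2 : measurable_fun setT (fun w => (\1_(Bset alg x del) w : R)%:E).
  have mi : measurable_fun setT (\1_(Bset alg x del) : Om -> R) by exact: measurable_indic.
  exact/measurable_EFinP.
have h1' : forall w, setT w -> (0 <= A%:E * (Num.max (hh T (alg w) (sx x)) 0)%:E)%E.
  by move=> w hw; apply: mule_ge0; [rewrite lee_fin|exact: h1].
have h2' : forall w, setT w -> (0 <= Bc%:E * (\1_(Bset alg x del) w)%:E)%E.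
  by move=> w hw; apply: mule_ge0; [rewrite lee_fin|exact: h2].
have m1' : measurable_fun setT (fun w => A%:E * (Num.max (hh T (alg w) (sx x)) 0)%:E)%E.
  rewrite (_ : (fun w => _) = EFin \o (fun w => A * Num.max (hh T (alg w) (sx x)) 0)); last by apply/funext => w; rewrite /= EFinM.
  by apply/measurable_EFinP; apply: measurable_funM => //; exact: measurable_cst.
have m2' : measurable_fun setT (fun w => Bc%:E * (\1_(Bset alg x del) w)%:E)%E.
  rewrite (_ : (fun w => _) = EFin \o (fun w => Bc * \1_(Bset alg x del) w)); last by apply/funext => w; rewrite /= EFinM.
  by apply/measurable_EFinP; apply: measurable_funM; [exact: measurable_cst|exact: measurable_indic].
under eq_integral => w _ do rewrite EFinD EFinM [X in (_ + X)%E]EFinM.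
rewrite ge0_integralD // ge0_integralZl_EFin // ge0_integralZl_EFin //.
rewrite (integral_indic _ measurableT mB) setIT.
apply: leeD => //; apply: lee_wpmul2l; first by rewrite lee_fin.
apply: int_mono_nm => w; first by rewrite lee_fin le_max lexx orbT.
rewrite lee_fin ge_max; apply/andP; split; first exact: smCE_ge.
exact: smCE_ge0.
Qed.

Lemma perw (R : realType) (Om : Type) (alg : Om -> seq bool -> R) T (del : R) n L w :
  0 <= del -> (forall s, 0 <= alg w s <= 1) -> (n * L <= T)%N ->
  (2 ^ T)%:R * (n%:R * L%:R / 4) - n%:R * (2 * (2 * (del + 1)) ^+ 2 * (2 ^ T)%:R) <=
  \sum_(x : {ffun 'I_T -> bool})
     (2 * L%:R * Num.max (hh T (alg w) (sx x)) 0 + n%:R * L%:R / 4 * \1_(Bset alg x del) w).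
Proof.
move=> d0 halg hT.
have hc := core (T := T) (alg := alg w) (n := n) (L := L) d0 halg hT.
have hav : \sum_(x : {ffun 'I_T -> bool}) av (alg w) del (sx x) T =
  (2 ^ T)%:R - \sum_(x : {ffun 'I_T -> bool}) \1_(Bset alg x del) w.
  under eq_bigr => x _ do rewrite av_indic.
  by rewrite sumrB sumr_const card_ffunT.
have hmax : \sum_(x : {ffun 'I_T -> bool}) hh T (alg w) (sx x) <=
  \sum_(x : {ffun 'I_T -> bool}) Num.max (hh T (alg w) (sx x)) 0.
  by apply: ler_sum => x _; rewrite le_max lexx.
rewrite big_split /= -!mulr_sumr.
rewrite hav in hc.
set I := \sum_(x : {ffun 'I_T -> bool}) \1_(Bset alg x del) w in hc *.
set H := \sum_(x : {ffun 'I_T -> bool}) hh T (alg w) (sx x) in hc hmax.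
set M := \sum_(x : {ffun 'I_T -> bool}) Num.max (hh T (alg w) (sx x)) 0 in hmax *.
have hL : 0 <= 2 * L%:R :> R by rewrite mulr_ge0 // ler0n.
have := ler_wpM2l hL hmax.
nra.
Qed.

Lemma final_e (R : realType) (K A Bc N g c : R) (X Y : \bar R) :
  0 < A -> 0 <= Bc -> 0 < N -> (0 <= X)%E -> (0 <= Y)%E ->
  (K%:E <= A%:E * X + Bc%:E * Y)%E -> ((N^-1)%:E * Y < c%:E)%E ->
  A * N * g <= K - Bc * N * c -> (g%:E <= (N^-1)%:E * X)%E.
Proof.
move=> A0 B0 N0; case: X => [x| |] //; last first.
  by move=> *; rewrite mulry gtr0_sg ?invr_gt0 // mul1e leey.
case: Y => [y| |] //; last first.
  by move=> _ _ _; rewrite mulry gtr0_sg ?invr_gt0 // mul1e ltNge leey.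
move=> x0 y0; rewrite -!EFinM -EFinD !lee_fin lte_fin => hK hy hg.
have hy' : y < c * N by rewrite -ltr_pdivrMr // mulrC.
have h1 : A * N * g <= A * x.
  apply: le_trans hg _.
  have : Bc * y <= Bc * (c * N) by apply: ler_wpM2l => //; exact: ltW.
  nra.
have h2 : N * g <= x.
  by rewrite -(ler_pM2l A0) mulrA.
by rewrite mulrC ler_pdivlMr // mulrC.
Qed.

Lemma params (R : realType) (r nR LR N : R) :
  32 <= r -> nR <= r -> r < nR + 1 -> r ^+ 3 < (LR + 1) * nR -> 0 <= LR -> 0 < N ->
  0 <= nR ->
  2 * LR * N * (32^-1 * r) <=
  (N * (nR * LR / 4) - nR * (2 * (2 * (32^-1 * r + 1)) ^+ 2 * N)) - nR * LR / 4 * N * 32^-1.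
Proof.
move=> r32 nr rn hT L0 N0 n0.
have r0 : 0 < r by lra.
have h0 : r * r ^+ 2 < r * (LR + 1).
  rewrite -exprS; apply: lt_le_trans hT _.
  by rewrite mulrC; apply: ler_wpM2r => //; lra.
have h1 : r ^+ 2 < LR + 1 by rewrite -(ltr_pM2l r0).
have h2 : 0 <= 32^-1 * r + 1 <= r / 16 by apply/andP; split; lra.
have h2' : (32^-1 * r + 1) ^+ 2 <= (r / 16) ^+ 2.
  by case/andP: h2 => a b; nra.
have h3 : (r / 16) ^+ 2 = r ^+ 2 / 256 by field.
have h4 : 1 <= LR by nra.
have h5 : nR * (32^-1 * r + 1) ^+ 2 <= nR * ((LR + 1) / 256).
  apply: ler_wpM2l => //; rewrite h3 in h2'; apply: le_trans h2' _; lra.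
have h6 : 0 <= LR * (23 * nR - 8 * r) by apply: mulr_ge0 => //; lra.
suff : 0 <= N * (nR * LR / 4 - nR * (2 * (2 * (32^-1 * r + 1)) ^+ 2) - nR * LR / 4 * 32^-1 - 2 * LR * (32^-1 * r)).
  set Z := (32^-1 * r + 1); move=> hh; rewrite -subr_ge0.
  have -> : N * (nR * LR / 4) - nR * (2 * (2 * Z) ^+ 2 * N) - nR * LR / 4 * N * 32^-1 - 2 * LR * N * (32^-1 * r) = N * (nR * LR / 4 - nR * (2 * (2 * Z) ^+ 2) - nR * LR / 4 * 32^-1 - 2 * LR * (32^-1 * r)) by ring.
  exact: hh.
apply: mulr_ge0; first lra.
set Z := (32^-1 * r + 1) in h5 *.
have -> : nR * (2 * (2 * Z) ^+ 2) = 8 * (nR * Z ^+ 2) by ring.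
nra.
Qed.

Theorem lemma12 (R : realType) :
  exists c : R, 0 < c /\
  exists T0 : nat, forall T : nat, (T0 <= T)%N ->
  forall (d : measure_display) (Omega : measurableType d)
         (P : probability Omega R) (alg : Omega -> seq bool -> R),
  (forall s : seq bool, measurable_fun setT (fun w => alg w s)) ->
  (forall (w : Omega) (s : seq bool), 0 <= alg w s <= 1) ->
  ((((2 ^ T)%:R : R)^-1)%:E *
     \sum_(x : {ffun 'I_T -> bool})
        P [set w | exists t : 'I_T,
                 (c * (T%:R `^ (3%:R^-1)) <=
                 `| partial_bias (outcome R x) (prediction alg x w) t | )%R]
     >= c%:E)%E
  \/
  ((((2 ^ T)%:R : R)^-1)%:E *
     \sum_(x : {ffun 'I_T -> bool})
        \int[P]_w (smCE (outcome R x) (prediction alg x w))%:E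
     >= (c * (T%:R `^ (3%:R^-1)))%R%:E)%E.
Proof.
exists (32%:R^-1); split; first by rewrite invr_gt0 ltr0n.
exists (2 ^ 15)%N => T hT d Omega P alg malg halg.
set r := T%:R `^ 3%:R^-1.
have r0 : 0 <= r by exact: powR_ge0.
have r3 : r ^+ 3 = T%:R.
  by rewrite /r -powR_mulrn ?powR_ge0 // -powRrM mulVf ?pnatr_eq0 // powRr1 // ler0n.
have hT' : (2 ^ 15)%:R <= T%:R :> R by rewrite ler_nat.
rewrite natrX in hT'.
have r32 : 32 <= r.
  rewrite leNgt; apply/negP => hr.
  have e : r ^+ 3 = r * (r * r) by rewrite !exprS expr0 mulr1.
  have : r * (r * r) < 32 * (32 * 32) by nra.
  have -> : 32 * (32 * 32) = 2 ^+ 15 :> R by rewrite -!natrM -natrX.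
  by rewrite -e r3; lra.
set n := Num.truncn r.
have /andP[nr rn] := truncn_itv r0.
have n0 : (0 < n)%N by rewrite truncn_gt0; lra.
set L := (T %/ n)%N.
have hnL : (n * L <= T)%N by rewrite mulnC leq_trunc_div.
have hTLr : r ^+ 3 < (L%:R + 1) * n%:R.
  by rewrite r3 natr1 -natrM ltr_nat ltn_ceil.
have hnT : (n <= T)%N.
  rewrite -(ler_nat R) -r3; apply: le_trans nr _.
  have e : r ^+ 3 = r * (r * r) by rewrite !exprS expr0 mulr1.
  rewrite e; nra.
have L0 : (0 < L)%N by rewrite divn_gt0.
set del := 32%:R^-1 * r.
have d0 : 0 <= del by rewrite /del; lra.
set N := ((2 ^ T)%:R : R).
have N0 : 0 < N by rewrite ltr0n expn_gt0.
match goal with |- ?A \/ ?B => case: (pselect A) => hc; [by left | right] end.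
have hlt : ((N^-1)%:E * \sum_(x : {ffun 'I_T -> bool}) P (Bset alg x del) < (32%:R^-1)%:E)%E.
  by rewrite ltNge; apply/negP.
have rn2 : r < n%:R + 1 by rewrite natr1.
have hpar := @params R r n%:R L%:R N r32 nr rn2 hTLr (ler0n _ _) N0 (ler0n _ _).
set K := N * (n%:R * L%:R / 4) - n%:R * (2 * (2 * (del + 1)) ^+ 2 * N).
have hLr : (0 < L%:R :> R) by rewrite ltr0n.
have hK0 : 0 <= K.
  have : 0 <= 2 * L%:R * N * (32^-1 * r) by apply: mulr_ge0; [apply: mulr_ge0; lra|lra].
  have : 0 <= n%:R * L%:R / 4 * N * 32^-1 :> R.
    by apply: mulr_ge0 => //; apply: mulr_ge0 => //; apply: mulr_ge0 => //; apply: mulr_ge0; rewrite ?ler0n.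
  rewrite /K /del; lra.
apply: (@final_e R K (2 * L%:R) (n%:R * L%:R / 4) N del (32%:R^-1) _
          (\sum_(x : {ffun 'I_T -> bool}) P (Bset alg x del))).
- lra.
- by apply: mulr_ge0 => //; apply: mulr_ge0; rewrite ?ler0n.
- exact: N0.
- by apply: sume_ge0 => x _; apply: integral_ge0 => w _; rewrite lee_fin smCE_ge0.
- by apply: sume_ge0 => x _.
- have hcst : (\int[P]_w (cst (K%:E) w) = K%:E)%E.
    rewrite integral_cst //; rewrite -[RHS]mule1; congr (_ * _)%E; exact: probability_setT.
  rewrite -hcst.
  apply: le_trans (@int_mono_nm _ _ R P (cst K%:E)
    (fun w => (\sum_(x : {ffun 'I_T -> bool})
       (2 * L%:R * Num.max (hh T (alg w) (sx x)) 0 + n%:R * L%:R / 4 * \1_(Bset alg x del) w))%:E) _ _) _.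
  + by move=> w; rewrite /cst lee_fin.
  + by move=> w; rewrite /= lee_fin; exact: perw.
  under eq_integral => w _ do rewrite -sumEFin.
  rewrite ge0_integral_sum //; first last.
  + move=> x w _; rewrite lee_fin; apply: addr_ge0; apply: mulr_ge0.
    * lra.
    * by rewrite le_max lexx orbT.
    * by apply: mulr_ge0 => //; apply: mulr_ge0; rewrite ?ler0n.
    * by rewrite indicE ler0n.
  + move=> x; apply/measurable_EFinP; apply: measurable_funD.
    * apply: measurable_funM; first exact: measurable_cst.
      by apply: measurable_maxr; [exact: meas_hh|exact: measurable_cst].
    * apply: measurable_funM; first exact: measurable_cst.
      exact/measurable_indic/B_meas.
  have hA : 0 <= 2 * L%:R :> R by lra.
  have hB : 0 <= n%:R * L%:R / 4 :> R by apply: mulr_ge0 => //; apply: mulr_ge0; rewrite ?ler0n.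
  apply: le_trans (lee_sum _ (fun x _ => @int_x R d Omega P alg T x del (2 * L%:R) (n%:R * L%:R / 4) hA hB malg halg)) _.
  rewrite big_split /= -!ge0_sume_distrr //.
  + by move=> x _; apply: integral_ge0 => w _; rewrite lee_fin smCE_ge0.
- exact: hlt.
- exact: hpar.
Qed.
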